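(* $\mathbf{E}[\lfloor r/2\rfloor] = 2/3 \pm O(1/i)$ and $\mathbf{E}[\lceil r/2 \rceil] = 4/3 \pm O(1/i)$.
   Context: In 2Merge$(A,B,T)$ with $T=(t_1,\dots,t_{i-2})$ sorted, $i$ even, $i\ge4$, after ensuring $A<B$, Step 2 compares $A$ with $t_{\lceil(1-2^{-r/2})i\rceil}$ for $r=1,2,\dots$ up to $2\lg i$ and stops at the first $r$ with $A<t_{\lceil(1-2^{-r/2})i\rceil}$; $r$ denotes this number of comparisons. The two inserted elements occupy uniformly random distinct positions among the $i$ positions, so given $A<B$, $\mathbf{Pr}[t_{\ell-1}<A<t_\ell]=(i-\ell)/\binom{i}{2}$; consequently $\mathbf{Pr}[r]=2^{-r}\pm O\!\left(\frac{1}{2^{r/2}i}\right)$. The expectations are over this distribution of $r$. *)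

(* Defs.v *)
From mathcomp Require Import all_boot all_order all_algebra.
From mathcomp Require Import all_classical all_reals all_analysis.
Set Implicit Arguments. Unset Strict Implicit. Unset Printing Implicit Defensive.
Import Order.TTheory GRing.Theory Num.Theory.
Local Open Scope ring_scope.

(* Index of the element of T compared with A in the r-th comparison of
   Step 2:  ceil((1 - 2^{-r/2}) i). *)
Definition probe_idx (R : realType) (i r : nat) : int :=
  Num.ceil ((1 - powR (2 : R) (- r%:R / 2)) * i%:R).

Definition rounds (R : realType) (i : nat) : seq nat :=
  [seq r <- iota 1 (2 * i) | (r%:R : R) <= 2 * (ln (i%:R : R) / ln 2)].

(* A lies in gap l of T, i.e. t_{l-1} < A < t_l (t_0 = -oo, t_{i-1} = +oo),
   for 1 <= l <= i-1.  Then A < t_c  iff  l <= c.  The number r of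
   comparisons is the first round r with A < t_{probe_idx i r}; if no
   round succeeds, all rounds have been performed. *)
Definition ncomp (R : realType) (i l : nat) : nat :=
  let s := rounds R i in
  nth (size s) s (find (fun r => (l%:Z <= probe_idx R i r)%R) s).

(* Pr[t_{l-1} < A < t_l] = (i - l) / binom(i,2) *)
Definition gap_prob (R : realType) (i l : nat) : R :=
  (i - l)%:R / 'C(i, 2)%:R.

Definition Er (R : realType) (i : nat) (f : nat -> R) : R :=
  \sum_(1 <= l < i) gap_prob R i l * f (ncomp R i l).

(* Main.v *)
Require Import Defs.
From mathcomp Require Import all_boot all_order all_algebra.
From mathcomp Require Import all_classical all_reals all_analysis.
From mathcomp Require Import zify ring lra.
Import Order.TTheory GRing.Theory Num.Theory.
Local Open Scope ring_scope.

Lemma filter_iota_down (P : pred nat) a N :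
  (forall x y, (x <= y)%N -> P y -> P x) ->
  seq.filter P (iota a N) = iota a (count P (iota a N)).
Proof.
move=> Pd; elim: N a => [|N IH] a //=.
case: ifP => Pa; first by rewrite IH.
have -> : seq.filter P (iota a.+1 N) = [::].
  apply/eqP; rewrite -size_eq0 size_filter -leqn0 leqNgt -has_count.
  apply/hasPn => x; rewrite mem_iota => /andP[h _]; apply/negP => Px.
  by move: (Pd a x (ltnW h) Px); rewrite Pa.
have -> : count P (iota a.+1 N) = 0%N.
  apply/eqP; rewrite -leqn0 leqNgt -has_count.
  apply/hasPn => x; rewrite mem_iota => /andP[h _]; apply/negP => Px.
  by move: (Pd a x (ltnW h) Px); rewrite Pa.
by [].
Qed.

Lemma ncomp_char (Q : pred nat) K k :
  (forall a b, (a <= b)%N -> Q a -> Q b) -> ~~ Q 0%N -> (k < K)%N ->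
  (k < nth K (iota 1 K) (find Q (iota 1 K)))%N = ~~ Q k.
Proof.
move=> Qm Q0 kK.
case: (ltnP (find Q (iota 1 K)) K) => hj.
  rewrite nth_iota // add1n ltnS.
  case: (leqP k (find Q (iota 1 K))) => hk.
    case: k hk kK => [|k] hk kK; first by rewrite Q0.
    have := before_find 0%N hk; rewrite nth_iota; last by lia.
    by rewrite add1n => ->.
  have hq : Q (nth 0%N (iota 1 K) (find Q (iota 1 K))).
    by apply: nth_find; rewrite has_find size_iota.
  rewrite nth_iota // add1n in hq.
  by rewrite (Qm _ _ hk hq).
rewrite nth_default ?size_iota // kK.
have : ~~ has Q (iota 1 K) by rewrite has_find size_iota -leqNgt.
move/hasPn => H; case: k kK => [|k] kK //.
by symmetry; apply: H; rewrite mem_iota; lia.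
Qed.

Lemma nth_find_le K (Q : pred nat) :
  (nth K (iota 1 K) (find Q (iota 1 K)) <= K)%N.
Proof.
case: (ltnP (find Q (iota 1 K)) K) => hj.
  by rewrite nth_iota // add1n.
by rewrite nth_default ?size_iota.
Qed.

Lemma sum_cnt n i : (\sum_(0 <= l < i) (n < l)%N = i - n.+1)%N.
Proof.
elim: i => [|i IH]; first by rewrite big_geq.
rewrite big_nat_recr //= IH; case: (ltnP n i) => h; lia.
Qed.

Lemma sum_tri n i :
  (\sum_(0 <= l < i) (if (n < l)%N then i - l else 0) = 'C(i - n, 2))%N.
Proof.
elim: i => [|i IH]; first by rewrite big_geq.
rewrite big_nat_recr //=.
rewrite (eq_big_nat _ _ (F2 := fun l => (if (n < l)%N then i - l else 0) + (n < l)%N)%N); last first.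
  move=> l /andP[_ hl]; case: ifP => h /=; lia.
rewrite big_split /= IH sum_cnt.
case: (ltnP n i) => h.
  have -> : (i.+1 - n = (i - n).+1)%N by lia.
  rewrite binS bin1; lia.
rewrite !bin_small; lia.
Qed.

Lemma bin2_mul m : ('C(m, 2) * 2 = m * m.-1)%N.
Proof.
elim: m => [|m IH] //; rewrite binS bin1 mulnDl IH /=; case: m {IH} => //= m; lia.
Qed.

Section S.
Variable R : realType.

Definition qq : R := powR (2:R) (- 2^-1).

Lemma qq_ge0 : 0 <= qq. Proof. exact: powR_ge0. Qed.

Lemma pk k : powR (2:R) (- k%:R / 2) = qq ^+ k.
Proof.
rewrite /qq -powR_mulrn ?powR_ge0 // -powRrM; congr powR; rewrite mulNr mulrC.
by rewrite mulNr.
Qed.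

Lemma qq2 : qq ^+ 2 = 2^-1.
Proof.
rewrite -pk (_ : - 2%:R / 2 = -1 :> R) ?powR_inv1 //; lra.
Qed.

Lemma qq_lt1 : qq < 1.
Proof. have h := qq2; have h0 := qq_ge0; rewrite expr2 in h; nra. Qed.

Lemma probe_mono i a b : (a <= b)%N -> probe_idx R i a <= probe_idx R i b.
Proof.
move=> ab; rewrite /probe_idx !pk; apply: le_ceil; apply: ler_wpM2r => //.
rewrite lerD2l lerN2; apply: ler_wiXn2l => //; [exact: qq_ge0| exact: ltW qq_lt1].
Qed.

Lemma probe0 i : probe_idx R i 0 = 0.
Proof. by rewrite /probe_idx pk expr0 subrr mul0r ceil0. Qed.

Lemma rounds_iota i : rounds R i = iota 1 (size (rounds R i)).
Proof.
rewrite /rounds size_filter; apply: filter_iota_down => x y xy.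
by apply: le_trans; rewrite ler_nat.
Qed.

Lemma ncomp_le i l : (ncomp R i l <= size (rounds R i))%N.
Proof.
rewrite /ncomp; set K := size (rounds R i).
by rewrite rounds_iota -/K nth_find_le.
Qed.

Lemma ncomp_gt i l k : (1 <= l)%N -> (k < size (rounds R i))%N ->
  (k < ncomp R i l)%N = (probe_idx R i k < l%:Z).
Proof.
move=> l1 kK; rewrite /ncomp; set K := size (rounds R i).
rewrite rounds_iota -/K ncomp_char //.
- by rewrite -ltNge.
- by move=> a b ab /le_trans; apply; apply: probe_mono.
- by rewrite probe0 -ltNge ltz_nat.
Qed.

End S.

Section S.
Variable R : realType.

Lemma key_bound (I p m : R) : 2 <= I -> 0 <= p -> p <= 1 -> 0 <= m ->
  m <= p * I -> p * I < m + 1 ->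
  `| m * (m - 1) / (I * (I - 1)) - p ^+ 2 | <= 6 * p / I.
Proof.
move=> I2 p0 p1 m0 mx xm.
set x := p * I in mx xm *.
have I0 : 0 < I by lra.
have I1 : 0 < I - 1 by lra.
have D0 : 0 < I * I * (I - 1) by rewrite !mulr_gt0.
have e : m * (m - 1) / (I * (I - 1)) - p ^+ 2 =
   (I * (m * (m - 1) - x ^+ 2) + x ^+ 2) / (I * I * (I - 1)).
  rewrite /x; field; apply/andP; split; apply/negP => /eqP; lra.
have f : 6 * p / I * (I * I * (I - 1)) = 6 * x * (I - 1).
  rewrite /x; field; apply/negP => /eqP; lra.
have x0 : 0 <= x by rewrite /x; nra.
have xI : x <= I by rewrite /x; nra.
clearbody x.
have g1 : 0 <= x ^+ 2 - m * (m - 1).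
  have h3 : 0 <= (x - m) * (x + m) by apply: mulr_ge0; lra.
  rewrite expr2; nra.
have g2 : x ^+ 2 - m * (m - 1) <= 3 * x.
  have h3 : 0 <= (m + 1 - x) * (x + m) by apply: mulr_ge0; lra.
  rewrite expr2; nra.
rewrite e ler_norml; apply/andP; split.
  rewrite ler_pdivlMr // mulNr f; rewrite expr2 in g1 g2 *; nra.
rewrite ler_pdivrMr // f; rewrite expr2 in g1 g2 *; nra.
Qed.

Definition dd (b : bool) (k : nat) : R := ((odd k == b) : nat)%:R.

Lemma half_sum r : (r./2)%:R = \sum_(0 <= k < r) dd true k.
Proof.
elim: r => [|r IH]; first by rewrite big_geq.
rewrite big_nat_recr //= -IH /dd -natrD uphalf_half; congr (_%:R).
by case: (odd r); rewrite /= addnC.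
Qed.

Lemma uphalf_sum r : (uphalf r)%:R = \sum_(0 <= k < r) dd false k.
Proof.
elim: r => [|r IH]; first by rewrite big_geq.
rewrite big_nat_recr //= -IH /dd -natrD uphalf_half; congr (_%:R).
by case: (odd r); rewrite /= ?addn1 ?addn0.
Qed.

Lemma target b n : \sum_(0 <= k < n) dd b k * (2^-1) ^+ k =
  (if b then 2/3 else 4/3) - (if odd n == b then 4/3 else 2/3) * (2^-1) ^+ n.
Proof.
elim: n => [|n IH].
  by rewrite big_geq //; case: b => /=; rewrite expr0 mulr1 subrr.
rewrite big_nat_recr //= IH exprS /dd.
move: IH; case: b; case: (odd n) => _ => /=; rewrite ?mul1r ?mul0r; set h := (2^-1)^+n; lra.
Qed.

Lemma bin2R a : ('C(a, 2))%:R = a%:R * (a%:R - 1) / 2 :> R.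
Proof.
have := congr1 (fun z => z%:R : R) (bin2_mul a); rewrite /= natrM => h.
case: a h => [|a] h; first by rewrite bin0n mul0r mul0r.
rewrite /= !natrM in h; rewrite -natr1 addrK natr1 -h; by field.
Qed.

Definition WW (i k : nat) : R :=
  \sum_(1 <= l < i) (if probe_idx R i k < l%:Z then gap_prob R i l else 0).

Lemma Er_decomp b i :
  @Er R i (fun r => \sum_(0 <= k < r) dd b k) =
  \sum_(0 <= k < size (rounds R i)) dd b k * WW i k.
Proof.
rewrite /Er.
transitivity (\sum_(1 <= l < i) \sum_(0 <= k < size (rounds R i))
   gap_prob R i l * (if probe_idx R i k < l%:Z then dd b k else 0)).
  apply: eq_big_nat => l /andP[l1 _]; rewrite mulr_sumr.
  rewrite (big_nat_widen _ _ _ _ _ (ncomp_le R i l)) big_mkcond /=.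
  apply: eq_big_nat => k /andP[_ kK]; rewrite ncomp_gt //.
  by case: ifP => _; rewrite ?mulr0.
rewrite exchange_big_nat; apply: eq_big_nat => k _; rewrite /WW mulr_sumr.
by apply: eq_big_nat => l _; case: ifP => _; rewrite ?mulr0 // mulrC.
Qed.

Lemma WW_eq i k (n : nat) : probe_idx R i k = n%:Z ->
  WW i k = ('C(i - n, 2))%:R / ('C(i, 2))%:R.
Proof.
move=> hn; rewrite /WW /gap_prob hn.
rewrite (eq_bigr (fun l => (if (n < l)%N then (i - l)%N else 0%N)%:R / ('C(i, 2))%:R)); last first.
  by move=> l _; rewrite ltz_nat; case: ifP; rewrite ?mul0r.
rewrite -mulr_suml -natr_sum -sum_tri.
clear hn; case: i => [|i]; first by rewrite !big_geq.
by rewrite [in RHS]big_ltn.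
Qed.

Lemma WW_bound i k : (2 <= i)%N ->
  `|WW i k - (2^-1) ^+ k| <= 6 * qq R ^+ k / i%:R.
Proof.
move=> i2.
have p0 : 0 <= qq R ^+ k by apply: exprn_ge0; apply: qq_ge0.
have p1 : qq R ^+ k <= 1 by apply: exprn_ile1; [apply: qq_ge0 | apply: ltW; apply: qq_lt1].
move: p0 p1; set p := qq R ^+ k => p0 p1.
have e2 : (2^-1) ^+ k = p ^+ 2 :> R by rewrite /p -exprM mulnC exprM qq2.
have hp : probe_idx R i k = Num.ceil (i%:R - p * i%:R).
  by rewrite /probe_idx pk mulrBl mul1r.
have I2 : (2 : R) <= i%:R by rewrite (ler_nat R 2 i).
have c0 : 0 <= Num.ceil (i%:R - p * i%:R) by rewrite ceil_ge0; nra.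
have [n hn] : exists n : nat, Num.ceil (i%:R - p * i%:R) = n%:Z.
  by exists `|Num.ceil (i%:R - p * i%:R)|%N; rewrite gez0_abs.
have := ceil_itv (i%:R - p * i%:R); rewrite hn => /andP[h1 h2].
rewrite rmorphB /= -!pmulrn in h1; rewrite -pmulrn in h2.
have ni : (n <= i)%N.
  have : Num.ceil (i%:R - p * i%:R) <= i%:Z by rewrite ceil_le_int -pmulrn; nra.
  by rewrite hn lez_nat.
rewrite (@WW_eq i k n (etrans hp hn)) !bin2R natrB // e2.
have ne : i%:R * (i%:R - 1) != 0 :> R by apply/negP => /eqP; nra.
rewrite (_ : forall A B : R, A / 2 / (B / 2) = A / B); last first.
  move=> A B; have [->|B0] := eqVneq B 0; first by rewrite !mul0r invr0 !mulr0.
  by field.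
apply: (@key_bound (i%:R) p (i%:R - n%:R)) => //.
- by rewrite subr_ge0 ler_nat.
- lra.
- lra.
Qed.

Lemma K_big i : (2 <= i)%N -> (i <= 2 ^ size (rounds R i))%N.
Proof.
move=> i2; set t := trunc_log 2 i.
have ht : (2 ^ t <= i)%N by apply: trunc_logP => //; lia.
have hl : (i < 2 ^ t.+1)%N by apply: trunc_log_ltn.
have tlt : (t < i)%N := leq_trans (@ltn_expl 2 t isT) ht.
have mem : t.+1 \in rounds R i.
  rewrite /rounds mem_filter mem_iota; apply/andP; split; last by lia.
  have l2 : 0 < ln (2:R) by apply: ln_gt0; lra.
  have i0 : (0 : R) < i%:R by rewrite ltr0n; lia.
  rewrite mulrA ler_pdivlMr // mulr_natl -lnXn // mulr_natl -lnXn //.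
  rewrite ler_ln ?posrE ?exprn_gt0 // -natrX -natrX ler_nat.
  rewrite expnS; nia.
rewrite rounds_iota mem_iota in mem.
apply: (leq_trans (ltnW hl)); rewrite leq_exp2l //; lia.
Qed.

Lemma geom K : \sum_(0 <= k < K) qq R ^+ k <= (1 - qq R)^-1.
Proof.
have h := subrX1 (qq R) K; rewrite big_mkord.
have q0 := qq_ge0 R; have q1 := qq_lt1 R.
have qK : 0 <= qq R ^+ K by apply: exprn_ge0.
rewrite -div1r ler_pdivlMr; last by lra.
nra.
Qed.

Definition Cst : R := 6 * (1 - qq R)^-1 + 2.

Lemma main_b b i : (4 <= i)%N ->
  `|@Er R i (fun r => \sum_(0 <= k < r) dd b k) - (if b then 2/3 else 4/3)|
    <= Cst / i%:R.
Proof.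
move=> i4; rewrite Er_decomp; set K := size (rounds R i).
set T : R := (if b then 2/3 else 4/3).
have i0 : (0 : R) < i%:R by rewrite ltr0n; lia.
have e : \sum_(0 <= k < K) dd b k * (WW i k - (2^-1) ^+ k) =
   \sum_(0 <= k < K) dd b k * WW i k - \sum_(0 <= k < K) dd b k * (2^-1) ^+ k.
  by rewrite -sumrB; apply: eq_bigr => k _; rewrite mulrBr.
have b1 : `|\sum_(0 <= k < K) dd b k * (WW i k - (2^-1) ^+ k)| <= 6 / i%:R * (1 - qq R)^-1.
  apply: (le_trans (ler_norm_sum _ _ _)).
  apply: (@le_trans _ _ (\sum_(0 <= k < K) 6 / i%:R * qq R ^+ k)).
    apply: ler_sum => k _; rewrite normrM.
    have -> : 6 / i%:R * qq R ^+ k = 6 * qq R ^+ k / i%:R by rewrite mulrAC.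
    have hd : `|dd b k| <= 1 by rewrite /dd; case: (odd k == b); rewrite ?normr0 ?normr1.
    have hw := @WW_bound i k (leq_trans (isT : (2 <= 4)%N) i4).
    have := normr_ge0 (WW i k - 2^-1 ^+ k); have := normr_ge0 (dd b k); nra.
  rewrite -mulr_sumr; apply: ler_wpM2l; first by rewrite divr_ge0 // ltW.
  exact: geom.
have b2 : `|\sum_(0 <= k < K) dd b k * (2^-1) ^+ k - T| <= 2 / i%:R.
  rewrite target -/T.
  have hK : (2^-1) ^+ K <= i%:R^-1 :> R.
    rewrite exprVn lef_pV2 ?posrE ?exprn_gt0 //.
    by rewrite -natrX ler_nat K_big //; lia.
  have h0 : 0 <= (2^-1) ^+ K :> R by apply: exprn_ge0; rewrite invr_ge0 ler0n.
  move: hK h0; set h := (2^-1) ^+ K => hK h0.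
  have hc : forall c : R, 0 <= c <= 2 -> `|T - c * h - T| <= 2 / i%:R.
    move=> c /andP[c0 c2].
    rewrite addrAC subrr add0r normrN ger0_norm; last exact: mulr_ge0.
    apply: (le_trans (ler_wpM2r h0 c2)); exact: ler_wpM2l.
  by case: ifP => _; apply: hc; apply/andP; split; lra.
have -> : \sum_(0 <= k < K) dd b k * WW i k - T =
   \sum_(0 <= k < K) dd b k * (WW i k - (2^-1) ^+ k) + (\sum_(0 <= k < K) dd b k * (2^-1) ^+ k - T).
  by rewrite e; lra.
apply: (le_trans (ler_normD _ _)).
rewrite /Cst mulrDl mulrAC.
by apply: lerD.
Qed.

End S.

Theorem lemma3' (R : realType) :
  exists C : R, forall i : nat, ~~ odd i -> (4 <= i)%N ->
    `| @Er R i (fun r => (r./2)%:R) - 2 / 3 | <= C / i%:R /\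
    `| @Er R i (fun r => (uphalf r)%:R) - 4 / 3 | <= C / i%:R.
Proof.
exists (Cst R) => i _ i4; split.
  have -> : (fun r => (r./2)%:R) = (fun r => \sum_(0 <= k < r) dd R true k).
    by apply: funext => r; apply: half_sum.
  exact: (@main_b R true i i4).
have -> : (fun r => (uphalf r)%:R) = (fun r => \sum_(0 <= k < r) dd R false k).
  by apply: funext => r; apply: uphalf_sum.
exact: (@main_b R false i i4).
Qed.

Theorem lemma3 (R : realType) :
  exists C : R, forall i : nat, ~~ odd i -> (4 <= i)%N ->
    `| @Er R i (fun r => (r./2)%:R) - 2 / 3 | <= C / i%:R /\
    `| @Er R i (fun r => (uphalf r)%:R) - 4 / 3 | <= C / i%:R.
Proof. exact: lemma3'. Qed.
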